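(* Let $n=2$, $D_0>0$, $\alpha>\beta>0$, and $\gamma_1,\gamma_2\in(0,1)$. Assume the matrix $H$ with $H_{ii}=\gamma_i$ and $H_{12}=H_{21}=-(\beta/\alpha)(\gamma_1+\gamma_2)/2$ is positive definite. Let $p^a_1\ge p^a_2\ge0$, and put $$D_0'=D_0(\alpha+\beta)/\alpha,\qquad \alpha'=(\alpha^2-\beta^2)/\alpha.$$ In the two-CP ex post regulation game described below: - If $$p^a_1\ \ge\ \frac{2\alpha}{\beta}\,p^a_2+\frac{(2\alpha-\beta)D_0}{\beta(\alpha-\beta)},$$ then there exists a pure-strategy Nash equilibrium with $d_1>0$ and $d_2=0$, and every pure-strategy Nash equilibrium is of this kind. Every such equilibrium satisfies: - $p^s_1+p^c_1=\frac{D_0'-\alpha'p^a_1}{2\alpha'}$, with $p^s_1$ (or $p^c_1$) otherwise free; - $d_1=\frac{D_0'+\alpha'p^a_1}{2}$; - the net revenue per unit demand $p^s_1+p^c_1+p^a_1=\frac{D_0'+\alpha'p^a_1}{2\alpha'}$ is shared in proportions $\gamma_1$ and $1-\gamma_1$ by the ISP and CP 1. - If this inequality does not hold, there is no pure-strategy Nash equilibrium.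
   Context: Two-CP model with one ISP. Prices $p^s_1,p^s_2$ are chosen by the ISP, and $p^c_i$ by CP $i$; write $p_i=p^s_i+p^c_i$. Demands $d_i(p_1,p_2)$ are defined piecewise: 1. If $p_1<(D_0+\beta p_2)/\alpha$ and $p_2<(D_0+\beta p_1)/\alpha$: $d_1=D_0-\alpha p_1+\beta p_2$ and $d_2=D_0-\alpha p_2+\beta p_1$. 2. If $p_1<D_0/(\alpha-\beta)$ and $p_2\ge(D_0+\beta p_1)/\alpha$: $d_1=D_0-\alpha p_1+\beta(D_0+\beta p_1)/\alpha$ and $d_2=0$. 3. The case symmetric to case 2, with indices $1,2$ swapped. 4. If $p_1\ge D_0/(\alpha-\beta)$ and $p_2\ge D_0/(\alpha-\beta)$: $d_1=d_2=0$. $p^a_i\ge0$ is CP $i$'s advertising revenue per unit demand. Ex post regulation: after prices are set, a regulator sets the payment $p^d_i$ from CP $i$ to the ISP so that the revenue per unit demand $p_i+p^a_i$ from CP $i$'s content is split as $\gamma_i(p_i+p^a_i)$ to the ISP and $(1-\gamma_i)(p_i+p^a_i)$ to CP $i$. The resulting payoffs are $$U_{ISP}=\gamma_1d_1(p_1+p^a_1)+\gamma_2d_2(p_2+p^a_2),\qquad U_{CP,i}=(1-\gamma_i)d_i(p_i+p^a_i).$$ The ISP chooses $(p^s_1,p^s_2)\in\mathbb{R}^2$ and each CP $i$ chooses $p^c_i\in\mathbb{R}$, all simultaneously. *)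

(* Defs.v *)
From Stdlib Require Import Reals Lra.
Open Scope R_scope.

(* Demand d1(p1,p2) of the two-CP model; cases 3 and 4 give d1 = 0.
   The four cases of the paper partition R^2 when alpha > beta > 0. *)
Definition dem1 (D0 al be p1 p2 : R) : R :=
  if Rlt_dec p1 ((D0 + be * p2) / al) then
    if Rlt_dec p2 ((D0 + be * p1) / al) then D0 - al * p1 + be * p2   (* case 1 *)
    else if Rlt_dec p1 (D0 / (al - be))
         then D0 - al * p1 + be * (D0 + be * p1) / al                  (* case 2 *)
         else 0
  else if Rlt_dec p2 ((D0 + be * p1) / al) then 0                      (* case 3 *)
  else if Rlt_dec p1 (D0 / (al - be))
       then D0 - al * p1 + be * (D0 + be * p1) / al                    (* case 2 *)
       else 0.                                                         (* case 4 *)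

Definition dem2 (D0 al be p1 p2 : R) : R := dem1 D0 al be p2 p1.

Definition U_ISP (D0 al be g1 g2 pa1 pa2 p1 p2 : R) : R :=
  g1 * dem1 D0 al be p1 p2 * (p1 + pa1) + g2 * dem2 D0 al be p1 p2 * (p2 + pa2).
Definition U_CP1 (D0 al be g1 pa1 p1 p2 : R) : R :=
  (1 - g1) * dem1 D0 al be p1 p2 * (p1 + pa1).
Definition U_CP2 (D0 al be g2 pa2 p1 p2 : R) : R :=
  (1 - g2) * dem2 D0 al be p1 p2 * (p2 + pa2).

Definition is_NE (D0 al be g1 g2 pa1 pa2 ps1 ps2 pc1 pc2 : R) : Prop :=
  (forall qs1 qs2 : R,
     U_ISP D0 al be g1 g2 pa1 pa2 (qs1 + pc1) (qs2 + pc2)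
       <= U_ISP D0 al be g1 g2 pa1 pa2 (ps1 + pc1) (ps2 + pc2)) /\
  (forall qc1 : R,
     U_CP1 D0 al be g1 pa1 (ps1 + qc1) (ps2 + pc2)
       <= U_CP1 D0 al be g1 pa1 (ps1 + pc1) (ps2 + pc2)) /\
  (forall qc2 : R,
     U_CP2 D0 al be g2 pa2 (ps1 + pc1) (ps2 + qc2)
       <= U_CP2 D0 al be g2 pa2 (ps1 + pc1) (ps2 + pc2)).

Definition posdef2 (a b c : R) : Prop :=
  forall x1 x2 : R, (x1 <> 0 \/ x2 <> 0) ->
    0 < a * x1 * x1 + 2 * b * x1 * x2 + c * x2 * x2.

(* Main.v *)
Require Import Defs.
From Stdlib Require Import Reals Lra Psatz.
Open Scope R_scope.

Definition u (D0 al be x y : R) : R := D0 - al*x + be*y.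
Definition Lf (D0 al be x : R) : R := D0*(al+be)/al - (al*al-be*be)/al*x.

Lemma lt_div_iff a x y : 0 < a -> (x < y/a <-> a*x < y).
Proof.
  intro Ha; split; intro H'.
  - assert (H0: a*x < a*(y/a)) by (apply Rmult_lt_compat_l; lra).
    replace (a*(y/a)) with y in H0 by (field; lra). exact H0.
  - apply (Rmult_lt_reg_l a); [lra|]. replace (a*(y/a)) with y by (field; lra). exact H'.
Qed.

Lemma Lf_eq D0 al be x y : 0 < al ->
  u D0 al be x y + be/al * u D0 al be y x = Lf D0 al be x.
Proof. intro. unfold u, Lf. field. lra. Qed.

Lemma clamp D0 al be x y : 0<D0 -> 0<be -> be<al ->
  dem1 D0 al be x y = Rmax 0 (Rmin (u D0 al be x y) (u D0 al be x y + be/al * u D0 al be y x)).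
Proof.
  intros HD Hb Hab.
  assert (Hal: 0 < al) by lra.
  assert (E1: x < (D0+be*y)/al <-> 0 < u D0 al be x y) by (rewrite lt_div_iff by lra; unfold u; lra).
  assert (E2: y < (D0+be*x)/al <-> 0 < u D0 al be y x) by (rewrite lt_div_iff by lra; unfold u; lra).
  assert (EL: D0 - al*x + be*(D0+be*x)/al = u D0 al be x y + be/al*u D0 al be y x) by (unfold u; field; lra).
  assert (EL2: D0 - al*x + be*(D0+be*x)/al = (al+be)/al*(D0-(al-be)*x)) by (field; lra).
  assert (Hp: 0 < (al+be)/al) by (apply Rdiv_lt_0_compat; lra).
  assert (E3: x < D0/(al-be) <-> 0 < u D0 al be x y + be/al*u D0 al be y x).
  { rewrite lt_div_iff by lra. rewrite <- EL, EL2. split; intro; nra. }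
  assert (Hc: 0 < be/al) by (apply Rdiv_lt_0_compat; lra).
  unfold dem1. rewrite EL.
  set (U1 := u D0 al be x y) in *. set (U2 := u D0 al be y x) in *.
  assert (HW1: 0 < U2 -> 0 < be/al*U2) by (intro; nra).
  assert (HW2: U2 <= 0 -> be/al*U2 <= 0) by (intro; nra).
  set (W := be/al*U2) in *. change (D0 - al * x + be * y) with U1.
  destruct (Rlt_dec x ((D0+be*y)/al)) as [h1|h1];
    [apply E1 in h1 | assert (h1' : ~ 0 < U1) by (rewrite <- E1; exact h1); clear h1];
  destruct (Rlt_dec y ((D0+be*x)/al)) as [h2|h2];
    try (apply E2 in h2); try (assert (h2' : ~ 0 < U2) by (rewrite <- E2; exact h2); clear h2);
  destruct (Rlt_dec x (D0/(al-be))) as [h3|h3];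
    try (apply E3 in h3); try (assert (h3' : ~ 0 < U1 + W) by (rewrite <- E3; exact h3); clear h3);
  unfold Rmin; repeat match goal with |- context[Rle_dec ?a ?b] => destruct (Rle_dec a b) end; unfold Rmax; repeat match goal with |- context[Rle_dec ?a ?b] => destruct (Rle_dec a b) end; lra.
Qed.

Ltac dtac D0 al be x y :=
  rewrite (clamp D0 al be x y) by lra;
  let E := fresh "E" in
  assert (E := Lf_eq D0 al be x y ltac:(lra));
  let Hc := fresh "Hc" in
  assert (Hc : 0 < be/al) by (apply Rdiv_lt_0_compat; lra);
  let HW1 := fresh in let HW2 := fresh in let HW3 := fresh in let HW4 := fresh in
  assert (HW1: 0 < u D0 al be y x -> 0 < be/al*u D0 al be y x) by (intro; nra);
  assert (HW2: u D0 al be y x <= 0 -> be/al*u D0 al be y x <= 0) by (intro; nra);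
  assert (HW3: 0 <= u D0 al be y x -> 0 <= be/al*u D0 al be y x) by (intro; nra);
  assert (HW4: u D0 al be y x < 0 -> be/al*u D0 al be y x < 0) by (intro; nra);
  set (W := be/al*u D0 al be y x) in *;
  unfold Rmin; repeat match goal with |- context[Rle_dec ?a ?b] => destruct (Rle_dec a b) end;
  unfold Rmax; repeat match goal with |- context[Rle_dec ?a ?b] => destruct (Rle_dec a b) end.


Lemma d_nonneg D0 al be x y : 0<D0 -> 0<be -> be<al -> 0 <= dem1 D0 al be x y.
Proof. intros. dtac D0 al be x y; lra. Qed.

Lemma d_lin D0 al be x y : 0<D0 -> 0<be -> be<al ->
  0 <= u D0 al be x y -> 0 <= u D0 al be y x -> dem1 D0 al be x y = u D0 al be x y.
Proof. intros. dtac D0 al be x y; lra. Qed.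

Lemma d_L D0 al be x y : 0<D0 -> 0<be -> be<al ->
  u D0 al be y x <= 0 -> 0 <= Lf D0 al be x -> dem1 D0 al be x y = Lf D0 al be x.
Proof. intros. dtac D0 al be x y; lra. Qed.

Lemma d_zero D0 al be x y : 0<D0 -> 0<be -> be<al ->
  u D0 al be x y <= 0 -> dem1 D0 al be x y = 0.
Proof. intros. dtac D0 al be x y; lra. Qed.

Lemma d_pos D0 al be x y : 0<D0 -> 0<be -> be<al ->
  0 < dem1 D0 al be x y -> 0 < u D0 al be x y /\ 0 < Lf D0 al be x.
Proof. intros ? ? ? H. revert H. dtac D0 al be x y; intros; lra. Qed.

Lemma d_posr D0 al be x y : 0<D0 -> 0<be -> be<al ->
  0 < u D0 al be x y -> 0 < Lf D0 al be x -> 0 < dem1 D0 al be x y.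
Proof. intros. dtac D0 al be x y; lra. Qed.

Lemma d_le D0 al be x y : 0<D0 -> 0<be -> be<al ->
  dem1 D0 al be x y <= Lf D0 al be x \/ dem1 D0 al be x y = 0.
Proof. intros. dtac D0 al be x y; lra. Qed.

Lemma LfAK D0 al be x : 0 < be -> be < al ->
  Lf D0 al be x = (al*al-be*be)/al * (D0/(al-be) - x).
Proof. intros. unfold Lf. field. lra. Qed.

Lemma parab D0 al be x y pa : 0<D0 -> 0<be -> be<al ->
  dem1 D0 al be x y * (x + pa) <=
  (al*al-be*be)/al * ((D0/(al-be)+pa)/2) * ((D0/(al-be)+pa)/2).
Proof.
  intros h1 h2 h3.
  assert (HA: 0 < (al*al-be*be)/al) by (apply Rdiv_lt_0_compat; nra).
  pose proof (d_nonneg D0 al be x y h1 h2 h3) as Hn.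
  pose proof (d_le D0 al be x y h1 h2 h3) as Hl. rewrite LfAK in Hl by lra.
  set (A := (al*al-be*be)/al) in *. set (K := D0/(al-be)) in *.
  set (d := dem1 D0 al be x y) in *.
  assert (Hsq: 0 <= A * (((K - x - (x+pa))/2) * ((K - x - (x+pa))/2))).
  { apply Rmult_le_pos; [lra| apply Rle_0_sqr]. }
  assert (Hsq2: 0 <= A * (((K+pa)/2) * ((K+pa)/2))).
  { apply Rmult_le_pos; [lra| apply Rle_0_sqr]. }
  rewrite Rmult_assoc.
  destruct Hl as [Hl|Hl]; [|rewrite Hl; lra].
  destruct (Rle_dec (x+pa) 0); [nra|].
  assert (d*(x+pa) <= A*((K-x)*(x+pa))) by (rewrite <- Rmult_assoc; apply Rmult_le_compat_r; lra).
  assert (E: A * (((K+pa)/2) * ((K+pa)/2)) - A*((K-x)*(x+pa)) = A * (((K - x - (x+pa))/2) * ((K - x - (x+pa))/2))) by (unfold A; field; lra).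
  lra.
Qed.

Lemma small_h a c e : 0 < e -> (forall h, 0 < h < e -> a*h <= c*(h*h)) -> a <= 0.
Proof.
  intros He H. destruct (Rle_dec a 0) as [|Ha]; [assumption|]. exfalso.
  assert (Ha': 0 < a) by lra.
  set (m := a / (2*(Rabs c + 1))).
  assert (Hc: 0 <= Rabs c) by apply Rabs_pos.
  assert (Hm: 0 < m) by (unfold m; apply Rdiv_lt_0_compat; lra).
  assert (Hm2: m * (2*(Rabs c+1)) = a) by (unfold m; field; lra).
  set (h := Rmin (e/2) m).
  assert (hp: 0 < h) by (unfold h; apply Rmin_glb_lt; lra).
  assert (h1: h <= e/2) by apply Rmin_l.
  assert (h2: h <= m) by apply Rmin_r.
  specialize (H h ltac:(lra)).
  assert (c <= Rabs c) by apply Rle_abs.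
  assert (c*h <= Rabs c * h) by (apply Rmult_le_compat_r; lra).
  assert (Rabs c * h <= Rabs c * m) by (apply Rmult_le_compat_l; lra).
  assert (c*h < a) by nra.
  nra.
Qed.

Lemma NE_char D0 al be g1 g2 pa1 pa2 p1 p2 :
  0<D0 -> 0<be -> be<al -> 0<g1<1 -> 0<g2<1 -> 0<=pa2 -> pa2<=pa1 ->
  (forall q1 q2, U_ISP D0 al be g1 g2 pa1 pa2 q1 q2 <= U_ISP D0 al be g1 g2 pa1 pa2 p1 p2) ->
  (forall q, dem1 D0 al be q p2 * (q+pa1) <= dem1 D0 al be p1 p2 * (p1+pa1)) ->
  (forall q, dem1 D0 al be q p1 * (q+pa2) <= dem1 D0 al be p2 p1 * (p2+pa2)) ->
  0 < dem1 D0 al be p1 p2 /\ dem1 D0 al be p2 p1 = 0 /\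
  dem1 D0 al be p1 p2 = (al*al-be*be)/al*(D0/(al-be) - p1) /\
  p1 = (D0/(al-be) - pa1)/2 /\ D0 + be*p1 + al*pa2 <= 0.
Proof.
  intros HD Hb Hab Hg1 Hg2 Hpa2 Hpa HI HC1 HC2.
  assert (Hal: 0 < al) by lra.
  assert (LF: forall x, Lf D0 al be x = (al*al-be*be)/al * (D0/(al-be) - x)) by (intro; apply LfAK; lra).
  assert (HA: 0 < (al*al-be*be)/al) by (apply Rdiv_lt_0_compat; nra).
  assert (HK: 0 < D0/(al-be)) by (apply Rdiv_lt_0_compat; lra).
  assert (HKe: al*(D0/(al-be)) = D0 + be*(D0/(al-be))) by (field; lra).
  set (A := (al*al-be*be)/al) in *. set (K := D0/(al-be)) in *.
  assert (Hnn: forall x y, 0 <= dem1 D0 al be x y) by (intros; apply d_nonneg; lra).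
  set (p1s := (K - pa1)/2).
  assert (Hd2s: dem1 D0 al be K p1s = 0).
  { apply d_zero; try lra. unfold u, p1s. assert (0 <= be*pa1) by nra. assert (0 < be*K) by nra. lra. }
  assert (Hd1s: dem1 D0 al be p1s K = A*(K-p1s)).
  { rewrite <- LF. apply d_L; try lra.
    - unfold u, p1s. assert (0 <= be*pa1) by nra. assert (0 < be*K) by nra. lra.
    - rewrite LF. unfold p1s. apply Rmult_le_pos; lra. }
  assert (HQ := HI p1s K). unfold U_ISP, dem2 in HQ, HI. rewrite Hd2s, Hd1s in HQ.
  assert (Hts: 0 < g1 * (A*(K-p1s)) * (p1s+pa1)).
  { apply Rmult_lt_0_compat; [apply Rmult_lt_0_compat|]; unfold p1s; try lra.
    apply Rmult_lt_0_compat; lra. }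
  set (d1 := dem1 D0 al be p1 p2) in *. set (d2 := dem1 D0 al be p2 p1) in *.
  assert (V1: 0 <= d1*(p1+pa1)). { specialize (HC1 (-pa1)). replace (-pa1+pa1) with 0 in HC1 by ring. lra. }
  assert (V2: 0 <= d2*(p2+pa2)). { specialize (HC2 (-pa2)). replace (-pa2+pa2) with 0 in HC2 by ring. lra. }
  assert (N1: 0 <= d1) by apply Hnn. assert (N2: 0 <= d2) by apply Hnn.
  destruct (Rle_lt_dec d1 0) as [Z1|P1]; destruct (Rle_lt_dec d2 0) as [Z2|P2].
  -
    exfalso. assert (d1 = 0) by lra. assert (d2 = 0) by lra.
    rewrite H, H0 in HQ. lra.
  -
    exfalso. assert (Z: d1 = 0) by lra.
    destruct (d_pos D0 al be p2 p1 ltac:(lra) ltac:(lra) ltac:(lra) P2) as [Hu2 HL2].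
    rewrite LF in HL2. assert (Hp2K: p2 < K) by nra.
    assert (Hs2: 0 <= p2 + pa2) by nra.
    set (T := (D0 + be*p2)/al).
    assert (HT: al*T = D0 + be*p2) by (unfold T; field; lra).
    assert (HT1: 0 < al*(T + pa1)) by nra.
    assert (HT2: T + pa1 > 0) by nra.
    assert (HTK: T < K) by nra.
    set (q := (T - pa1)/2).
    assert (Hdq: 0 < dem1 D0 al be q p2).
    { apply d_posr; try lra.
      - unfold u, q. nra.
      - rewrite LF. unfold q. apply Rmult_lt_0_compat; lra. }
    specialize (HC1 q). rewrite Z in HC1.
    assert (0 < dem1 D0 al be q p2 * (q + pa1)) by (apply Rmult_lt_0_compat; [exact Hdq | unfold q; lra]).
    lra.
  -
    assert (Z: d2 = 0) by lra.
    destruct (d_pos D0 al be p1 p2 ltac:(lra) ltac:(lra) ltac:(lra) P1) as [Hu1 HL1].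
    assert (Hu2: u D0 al be p2 p1 <= 0).
    { destruct (Rle_lt_dec (u D0 al be p2 p1) 0) as [|Hu2]; [assumption|].
      exfalso. assert (dem1 D0 al be p2 p1 = u D0 al be p2 p1) by (apply d_lin; lra).
      fold d2 in H. lra. }
    assert (Hd1: d1 = A*(K-p1)) by (rewrite <- LF; apply d_L; lra).
    rewrite LF in HL1.
    rewrite Z, Hd1 in HQ.
    assert (Hp1K: p1 < K) by nra.
    assert (Hp1: p1 = p1s).
    { assert (Hg: g1*A*((p1 - p1s)*(p1 - p1s)) <= 0).
      { assert (E: g1 * (A * (K - p1)) * (p1 + pa1) = g1*(A*(K-p1s))*(p1s+pa1) - g1*A*((p1 - p1s)*(p1 - p1s)))
          by (unfold p1s; field).
        lra. }
      assert (0 < g1*A) by (apply Rmult_lt_0_compat; lra).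
      assert (Hsq: (p1 - p1s)*(p1-p1s) <= 0) by nra.
      nra. }
    split; [lra|]. split; [lra|]. split; [exact Hd1|]. split; [exact Hp1|].
    destruct (Rle_lt_dec (D0 + be*p1 + al*pa2) 0) as [|Hc]; [assumption|]. exfalso.
    set (T := (D0 + be*p1)/al).
    assert (HT: al*T = D0 + be*p1) by (unfold T; field; lra).
    assert (HT2: T + pa2 > 0) by nra.
    assert (HTK: T < K) by nra.
    set (q := (T - pa2)/2).
    assert (Hdq: 0 < dem1 D0 al be q p1).
    { apply d_posr; try lra.
      - unfold u, q. nra.
      - rewrite LF. unfold q. apply Rmult_lt_0_compat; lra. }
    specialize (HC2 q). rewrite Z in HC2.
    assert (0 < dem1 D0 al be q p1 * (q + pa2)) by (apply Rmult_lt_0_compat; [exact Hdq | unfold q; lra]).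
    lra.
  -
    exfalso.
    destruct (d_pos D0 al be p1 p2 ltac:(lra) ltac:(lra) ltac:(lra) P1) as [Hu1 _].
    destruct (d_pos D0 al be p2 p1 ltac:(lra) ltac:(lra) ltac:(lra) P2) as [Hu2 _].
    assert (Hd1: d1 = u D0 al be p1 p2) by (apply d_lin; lra).
    assert (Hd2: d2 = u D0 al be p2 p1) by (apply d_lin; lra).
    set (U1 := u D0 al be p1 p2) in *. set (U2 := u D0 al be p2 p1) in *.
    assert (F1: U1 - al*(p1+pa1) <= 0).
    { apply (small_h _ al (U1/al)). apply Rdiv_lt_0_compat; lra.
      intros h [h0 h1].
      assert (hu: al*h < U1) by (apply lt_div_iff in h1; lra).
      assert (E: dem1 D0 al be (p1+h) p2 = U1 - al*h).
      { rewrite d_lin; [unfold U1, u; ring|lra|lra|lra| |]; unfold U1, U2, u in *; nra. }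
      specialize (HC1 (p1+h)). rewrite E, Hd1 in HC1. nra. }
    assert (F2: al*(p2+pa2) - U2 <= 0).
    { apply (small_h _ al (U1/be)). apply Rdiv_lt_0_compat; lra.
      intros h [h0 h1].
      assert (hu: be*h < U1) by (apply lt_div_iff in h1; lra).
      assert (E: dem1 D0 al be (p2-h) p1 = U2 + al*h).
      { rewrite d_lin; [unfold U2, u; ring|lra|lra|lra| |]; unfold U1, U2, u in *; nra. }
      specialize (HC2 (p2-h)). rewrite E, Hd2 in HC2. nra. }
    assert (F3: g1*be*(p1+pa1) + g2*(U2 - al*(p2+pa2)) <= 0).
    { apply (small_h _ (g2*al) (U2/al)). apply Rdiv_lt_0_compat; lra.
      intros h [h0 h1].
      assert (hu: al*h < U2) by (apply lt_div_iff in h1; lra).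
      assert (E1: dem1 D0 al be p1 (p2+h) = U1 + be*h).
      { rewrite d_lin; [unfold U1, u; ring|lra|lra|lra| |]; unfold U1, U2, u in *; nra. }
      assert (E2: dem1 D0 al be (p2+h) p1 = U2 - al*h).
      { rewrite d_lin; [unfold U2, u; ring|lra|lra|lra| |]; unfold U1, U2, u in *; nra. }
      specialize (HI p1 (p2+h)). rewrite E1, E2, Hd1, Hd2 in HI. nra. }
    assert (0 < g1*be*(p1+pa1)).
    { apply Rmult_lt_0_compat; [apply Rmult_lt_0_compat; lra|]. nra. }
    nra.
Qed.

Lemma ISP_bound D0 al be g1 g2 pa1 pa2 q1 q2 :
  0<D0 -> 0<be -> be<al -> 0<g1<1 -> 0<g2<1 -> 0<=pa2 -> pa2<=pa1 ->
  posdef2 g1 (- (be / al) * (g1 + g2) / 2) g2 ->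
  D0 + be*((D0/(al-be) - pa1)/2) + al*pa2 <= 0 ->
  U_ISP D0 al be g1 g2 pa1 pa2 q1 q2 <=
  g1 * ((al*al-be*be)/al * ((D0/(al-be)+pa1)/2) * ((D0/(al-be)+pa1)/2)).
Proof.
  intros HD Hb Hab Hg1 Hg2 Hpa2 Hpa Hpd Hc.
  assert (Hal: 0 < al) by lra.
  pose proof (parab D0 al be q1 q2 pa1 HD Hb Hab) as P1.
  pose proof (parab D0 al be q2 q1 pa2 HD Hb Hab) as P2.
  assert (HA: 0 < (al*al-be*be)/al) by (apply Rdiv_lt_0_compat; nra).
  assert (HK: 0 < D0/(al-be)) by (apply Rdiv_lt_0_compat; lra).
  assert (HKe: D0 = (al-be)*(D0/(al-be))) by (field; lra).
  assert (HAe: (al*al-be*be)/al = al - be/al*be) by (field; lra).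
  assert (Hce: be/al*al = be) by (field; lra).
  assert (Hc0: 0 < be/al) by (apply Rdiv_lt_0_compat; lra).
  assert (Hc1: be/al < 1) by nra.
  set (c := be/al) in *.
  assert (Hdet: (c*(g1+g2)/2)*(c*(g1+g2)/2) < g1*g2).
  { set (m := c*(g1+g2)/2).
    assert (Hm: 0 < m) by (unfold m; nra).
    specialize (Hpd m g1 (or_introl (Rgt_not_eq _ _ Hm))).
    replace (g1 * m * m + 2 * (- c * (g1 + g2) / 2) * m * g1 + g2 * g1 * g1)
      with (g1 * (g1*g2 - m*m)) in Hpd by (unfold m; field).
    nra. }
  set (A := (al*al-be*be)/al) in *. set (K := D0/(al-be)) in *.
  set (r := (K+pa1)/2) in *. set (r2 := (K+pa2)/2) in *.
  assert (Hgr: g2*(A*r2*r2) <= g1*(A*r*r)).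
  {
    assert (H1: 2*al*r2 <= be*r) by (unfold r, r2; nra).
    assert (H4: be*be*g2 < 4*al*al*g1).
    { assert (J1: g2*g2*c*c <= (c*(g1+g2))*(c*(g1+g2))) by nra.
      assert (J2: c*c*g2 < 4*g1) by nra.
      assert (J3: al*al*(c*c*g2) < al*al*(4*g1)) by (apply Rmult_lt_compat_l; nra).
      replace (al*al*(c*c*g2)) with ((c*al)*(c*al)*g2) in J3 by ring.
      rewrite Hce in J3. lra. }
    assert (0 <= r2) by (unfold r2; lra).
    assert (J0: 0 <= 2*al*r2) by (apply Rmult_le_pos; lra).
    assert (H5: (2*al*r2)*(2*al*r2) <= (be*r)*(be*r)) by (apply Rmult_le_compat; lra).
    assert (H5': g1*((2*al*r2)*(2*al*r2)) <= g1*((be*r)*(be*r))) by (apply Rmult_le_compat_l; lra).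
    assert (J4: 0 <= r2*r2) by nra.
    assert (H6: (be*be*g2)*(r2*r2) <= (4*al*al*g1)*(r2*r2)) by (apply Rmult_le_compat_r; lra).
    assert (H7: (be*be)*(g2*r2*r2) <= (be*be)*(g1*r*r)) by nra.
    assert (H8: g2*r2*r2 <= g1*r*r).
    { apply Rmult_le_reg_l with (be*be); [nra|exact H7]. }
    assert (H9: A*(g2*r2*r2) <= A*(g1*r*r)) by (apply Rmult_le_compat_l; lra).
    nra. }
  unfold U_ISP, dem2.
  destruct (Rle_lt_dec (u D0 al be q2 q1) 0) as [Z2|P2'].
  { rewrite (d_zero D0 al be q2 q1) by lra.
    assert (g1 * (dem1 D0 al be q1 q2 * (q1 + pa1)) <= g1 * (A*r*r)) by (apply Rmult_le_compat_l; lra).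
    lra. }
  destruct (Rle_lt_dec (u D0 al be q1 q2) 0) as [Z1|P1'].
  { rewrite (d_zero D0 al be q1 q2) by lra.
    assert (g2 * (dem1 D0 al be q2 q1 * (q2 + pa2)) <= g2 * (A*r2*r2)) by (apply Rmult_le_compat_l; lra).
    lra. }
  rewrite (d_lin D0 al be q1 q2) by lra.
  rewrite (d_lin D0 al be q2 q1) by lra.
  set (U2 := u D0 al be q2 q1).
  set (t := q1 + pa1 - r).
  set (a := g1*A). set (b := c*(g1-g2)). set (d := g2/al).
  set (lc := ((g1-g2)*be*r - g2*(D0 + al*pa2 - be*pa1))/al).
  assert (Id: g1*(A*r*r) - (g1 * u D0 al be q1 q2 * (q1 + pa1) + g2 * U2 * (q2 + pa2))
             = a*t*t + b*t*U2 + d*U2*U2 + lc*U2).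
  { unfold a, b, d, lc, t, U2, u, r, A, c, K. field. lra. }
  assert (Ha: 0 < a) by (unfold a; nra).
  assert (Hdisc: 0 <= 4*a*d - b*b).
  { assert (E: 4*a*d - b*b = 4*(g1*g2 - (c*(g1+g2)/2)*(c*(g1+g2)/2))).
    { unfold a, d, b. rewrite HAe. unfold c. field. lra. }
    lra. }
  assert (HQ: 0 <= a*t*t + b*t*U2 + d*U2*U2).
  { assert (E: 4*a*(a*t*t + b*t*U2 + d*U2*U2) = (2*a*t + b*U2)*(2*a*t+b*U2) + (4*a*d-b*b)*(U2*U2)) by ring.
    assert (0 <= (2*a*t + b*U2)*(2*a*t+b*U2)) by apply Rle_0_sqr.
    assert (0 <= (4*a*d-b*b)*(U2*U2)) by (apply Rmult_le_pos; [lra|apply Rle_0_sqr]).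
    destruct (Rle_lt_dec 0 (a*t*t + b*t*U2 + d*U2*U2)) as [|Hn]; [assumption|].
    assert (4*a*(a*t*t + b*t*U2 + d*U2*U2) < 0).
    { assert (0 < 4*a) by lra. 
      assert (4*a*(a*t*t + b*t*U2 + d*U2*U2) < 4*a*0) by (apply Rmult_lt_compat_l; lra). lra. }
    lra. }
  assert (Hlc: 0 <= lc).
  { unfold lc. apply Rmult_le_pos; [|left; apply Rinv_0_lt_compat; lra].
    assert (E: (g1 - g2) * be * r - g2 * (D0 + al * pa2 - be * pa1)
              = g1*be*r - g2*(D0 + be*((K - pa1)/2) + al*pa2)) by (unfold r; field).
    rewrite E. assert (0 < be*r) by (unfold r; nra). assert (0 <= g2 * - (D0 + be * ((K - pa1) / 2) + al * pa2)) by (apply Rmult_le_pos; lra). assert (0 < g1*(be*r)) by (apply Rmult_lt_0_compat; lra). lra. }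
  assert (0 <= lc*U2) by (apply Rmult_le_pos; unfold U2; lra).
  lra.
Qed.

Lemma cond_iff D0 al be pa1 pa2 : 0<D0 -> 0<be -> be<al ->
  (pa1 >= 2 * al / be * pa2 + (2 * al - be) * D0 / (be * (al - be)) <->
   D0 + be*((D0/(al-be) - pa1)/2) + al*pa2 <= 0).
Proof.
  intros HD Hb Hab.
  assert (E: -(D0 + be*((D0/(al-be) - pa1)/2) + al*pa2) =
             be/2 * (pa1 - (2 * al / be * pa2 + (2 * al - be) * D0 / (be * (al - be))))).
  { field. lra. }
  split; intro H; nra.
Qed.

Lemma NE_unpack D0 al be g1 g2 pa1 pa2 ps1 ps2 pc1 pc2 :
  0<g1<1 -> 0<g2<1 ->
  is_NE D0 al be g1 g2 pa1 pa2 ps1 ps2 pc1 pc2 ->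
  (forall q1 q2, U_ISP D0 al be g1 g2 pa1 pa2 q1 q2 <= U_ISP D0 al be g1 g2 pa1 pa2 (ps1+pc1) (ps2+pc2)) /\
  (forall q, dem1 D0 al be q (ps2+pc2) * (q+pa1) <= dem1 D0 al be (ps1+pc1) (ps2+pc2) * ((ps1+pc1)+pa1)) /\
  (forall q, dem1 D0 al be q (ps1+pc1) * (q+pa2) <= dem1 D0 al be (ps2+pc2) (ps1+pc1) * ((ps2+pc2)+pa2)).
Proof.
  intros Hg1 Hg2 [HI [HC1 HC2]]. split; [|split].
  - intros q1 q2. specialize (HI (q1 - pc1) (q2 - pc2)).
    replace (q1 - pc1 + pc1) with q1 in HI by ring. replace (q2 - pc2 + pc2) with q2 in HI by ring.
    exact HI.
  - intro q. specialize (HC1 (q - ps1)). replace (ps1 + (q - ps1)) with q in HC1 by ring.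
    unfold U_CP1 in HC1. rewrite !Rmult_assoc in HC1.
    apply Rmult_le_reg_l in HC1; lra.
  - intro q. specialize (HC2 (q - ps2)). replace (ps2 + (q - ps2)) with q in HC2 by ring.
    unfold U_CP2, dem2 in HC2. rewrite !Rmult_assoc in HC2.
    apply Rmult_le_reg_l in HC2; lra.
Qed.

Theorem theorem4 (D0 al be g1 g2 pa1 pa2 : R) :
  0 < D0 -> 0 < be -> be < al ->
  0 < g1 < 1 -> 0 < g2 < 1 ->
  posdef2 g1 (- (be / al) * (g1 + g2) / 2) g2 ->
  0 <= pa2 -> pa2 <= pa1 ->
  let D0' := D0 * (al + be) / al in
  let al' := (al * al - be * be) / al in
  (pa1 >= 2 * al / be * pa2 + (2 * al - be) * D0 / (be * (al - be)) ->
     (forall x : R, exists ps2 pc1 pc2 : R,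
        is_NE D0 al be g1 g2 pa1 pa2 x ps2 pc1 pc2 /\
        0 < dem1 D0 al be (x + pc1) (ps2 + pc2) /\
        dem2 D0 al be (x + pc1) (ps2 + pc2) = 0) /\
     (forall ps1 ps2 pc1 pc2 : R,
        is_NE D0 al be g1 g2 pa1 pa2 ps1 ps2 pc1 pc2 ->
        let p1 := ps1 + pc1 in
        let p2 := ps2 + pc2 in
        0 < dem1 D0 al be p1 p2 /\
        dem2 D0 al be p1 p2 = 0 /\
        p1 = (D0' - al' * pa1) / (2 * al') /\
        dem1 D0 al be p1 p2 = (D0' + al' * pa1) / 2 /\
        p1 + pa1 = (D0' + al' * pa1) / (2 * al') /\
        U_ISP D0 al be g1 g2 pa1 pa2 p1 p2 = g1 * dem1 D0 al be p1 p2 * (p1 + pa1) /\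
        U_CP1 D0 al be g1 pa1 p1 p2 = (1 - g1) * dem1 D0 al be p1 p2 * (p1 + pa1)))
  /\
  (~ (pa1 >= 2 * al / be * pa2 + (2 * al - be) * D0 / (be * (al - be))) ->
     forall ps1 ps2 pc1 pc2 : R, ~ is_NE D0 al be g1 g2 pa1 pa2 ps1 ps2 pc1 pc2).
Proof.
  intros HD Hb Hab Hg1 Hg2 Hpd Hpa2 Hpa D0' al'.
  assert (Hal: 0 < al) by lra.
  assert (HA: 0 < (al*al-be*be)/al) by (apply Rdiv_lt_0_compat; nra).
  assert (HK: 0 < D0/(al-be)) by (apply Rdiv_lt_0_compat; lra).
  assert (HKe: al*(D0/(al-be)) = D0 + be*(D0/(al-be))) by (field; lra).
  assert (LF: forall x, Lf D0 al be x = (al*al-be*be)/al * (D0/(al-be) - x)) by (intro; apply LfAK; lra).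
  pose proof (cond_iff D0 al be pa1 pa2 HD Hb Hab) as CI.
  split.
  - intro Hcond. apply CI in Hcond.
    assert (Hd2s: dem1 D0 al be (D0/(al-be)) ((D0/(al-be) - pa1)/2) = 0).
    { apply d_zero; try lra. unfold u. assert (0 <= be*pa1) by nra.
      assert (0 < be*(D0/(al-be))) by nra. lra. }
    assert (Hd1s: dem1 D0 al be ((D0/(al-be) - pa1)/2) (D0/(al-be)) =
                  (al*al-be*be)/al*((D0/(al-be)+pa1)/2)).
    { rewrite d_L; try lra.
      - rewrite LF. field. lra.
      - unfold u. assert (0 <= be*pa1) by nra. assert (0 < be*(D0/(al-be))) by nra. lra.
      - rewrite LF. apply Rmult_le_pos; lra. }
    split.
    + intro x. exists (D0/(al-be)), ((D0/(al-be) - pa1)/2 - x), 0.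
      unfold is_NE.
      replace (x + ((D0/(al-be) - pa1)/2 - x)) with ((D0/(al-be) - pa1)/2) by ring.
      replace (D0/(al-be) + 0) with (D0/(al-be)) by ring.
      split; [|split].
      * split; [|split].
        -- intros qs1 qs2.
           replace (qs2 + 0) with qs2 by ring.
           eapply Rle_trans; [apply ISP_bound; assumption|].
           right. unfold U_ISP, dem2. rewrite Hd1s, Hd2s. field. lra.
        -- intro qc1. unfold U_CP1. rewrite Hd1s, !Rmult_assoc.
           apply Rmult_le_compat_l; [lra|].
           pose proof (parab D0 al be (x+qc1) (D0/(al-be)) pa1 HD Hb Hab) as P.
           replace ((D0 / (al - be) - pa1) / 2 + pa1) with ((D0/(al-be)+pa1)/2) by (field; lra).
           rewrite <- !Rmult_assoc. exact P.
        -- intro qc2. unfold U_CP2, dem2. rewrite Hd2s.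
           replace ((1 - g2) * 0 * (D0 / (al - be) + pa2)) with ((1-g2)*0) by ring.
           rewrite Rmult_assoc. apply Rmult_le_compat_l; [lra|].
           set (q := D0/(al-be) + qc2).
           destruct (Rle_lt_dec (u D0 al be q ((D0/(al-be) - pa1)/2)) 0) as [Z|P].
           ++ rewrite d_zero by lra. lra.
           ++ unfold u in P.
              assert (Hq: q + pa2 < 0) by nra.
              pose proof (d_nonneg D0 al be q ((D0/(al-be) - pa1)/2) HD Hb Hab). nra.
      * rewrite Hd1s. apply Rmult_lt_0_compat; lra.
      * unfold dem2. exact Hd2s.
    + intros ps1 ps2 pc1 pc2 HNE p1 p2.
      destruct (NE_unpack _ _ _ _ _ _ _ _ _ _ _ Hg1 Hg2 HNE) as [HI [HC1 HC2]].
      destruct (NE_char D0 al be g1 g2 pa1 pa2 p1 p2 HD Hb Hab Hg1 Hg2 Hpa2 Hpa HI HC1 HC2)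
        as [P1 [Z2 [Hd1 [Hp1 Hc]]]].
      assert (Hdem2: dem2 D0 al be p1 p2 = 0) by (unfold dem2; exact Z2).
      assert (Hn: al*al - be*be <> 0) by nra.
      unfold D0', al'.
      split; [exact P1|]. split; [exact Hdem2|].
      split; [rewrite Hp1; field; lra|].
      split; [rewrite Hd1, Hp1; field; lra|].
      split; [rewrite Hp1; field; lra|].
      split; [unfold U_ISP; rewrite Hdem2; ring|].
      reflexivity.
  - intros Hn ps1 ps2 pc1 pc2 HNE.
    destruct (NE_unpack _ _ _ _ _ _ _ _ _ _ _ Hg1 Hg2 HNE) as [HI [HC1 HC2]].
    destruct (NE_char D0 al be g1 g2 pa1 pa2 _ _ HD Hb Hab Hg1 Hg2 Hpa2 Hpa HI HC1 HC2)
      as [P1 [Z2 [Hd1 [Hp1 Hc]]]].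
    apply Hn. apply CI. rewrite <- Hp1. exact Hc.
Qed.
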